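(* Let $n\ge2$, let $x,y\in\mathbb C^n$, and let $B=xe_n^\ast+e_ny^\ast\in M_n(\mathbb C)$ have nonzero entries at positions $(1,n)$, $(n,1)$ and $(n,n)$. Then $B$ has rank two, so its singular value decomposition has the form $B=\sigma_1u_1v_1^\ast+\sigma_2u_2v_2^\ast$ with $\sigma_1\ge\sigma_2>0$ and orthonormal pairs $u_1,u_2$ and $v_1,v_2$; both summands $\sigma_iu_iv_i^\ast$ have nonzero $(1,1)$ entry; and $\sigma_1(B)>\sigma_2(B)$.
   Context: $e_1,\dots,e_n$ is the standard basis of $\mathbb C^n$ (column vectors), and $\sigma_1(B)\ge\sigma_2(B)\ge\dots$ denote the singular values of $B$. *)

(* Defs.v *)
From HB Require Import structures.
From mathcomp Require Import all_boot all_order all_algebra.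
From mathcomp Require Import complex.
From mathcomp Require Import reals.
Set Implicit Arguments. Unset Strict Implicit. Unset Printing Implicit Defensive.
Import Order.TTheory GRing.Theory Num.Theory.
Local Open Scope ring_scope.

Definition adjmx (C : numClosedFieldType) (m n : nat) (A : 'M[C]_(m, n)) : 'M[C]_(n, m) :=
  map_mx Num.conj A^T.

Definition cdot (C : numClosedFieldType) (n : nat) (u v : 'cV[C]_n) : C :=
  (adjmx u *m v) 0 0.

Definition orthonormal2 (C : numClosedFieldType) (n : nat) (u1 u2 : 'cV[C]_n) : Prop :=
  [/\ cdot u1 u1 = 1, cdot u2 u2 = 1 & cdot u1 u2 = 0].

Definition e_last (C : numClosedFieldType) (k : nat) : 'cV[C]_k.+2 :=
  delta_mx ord_max 0.

Definition Bmat (C : numClosedFieldType) (k : nat) (x y : 'cV[C]_k.+2) : 'M[C]_k.+2 :=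
  x *m adjmx (e_last C k) + e_last C k *m adjmx y.

Definition svd2 (R : rcfType) (n : nat) (B : 'M[R[i]]_n) (s1 s2 : R)
  (u1 u2 v1 v2 : 'cV[R[i]]_n) : Prop :=
  [/\ s2 <= s1, 0 < s2, orthonormal2 u1 u2, orthonormal2 v1 v2 &
      B = (s1%:C)%C *: (u1 *m adjmx v1) + (s2%:C)%C *: (u2 *m adjmx v2)].

(* Main.v *)
Require Import Defs.
From HB Require Import structures.
From mathcomp Require Import all_boot all_order all_algebra.
From mathcomp Require Import complex.
From mathcomp Require Import reals.
From mathcomp Require Import ring lra.
Set Implicit Arguments. Unset Strict Implicit. Unset Printing Implicit Defensive.
Import Order.TTheory GRing.Theory Num.Theory.
Local Open Scope ring_scope.

Section Basics.
Variable C : numClosedFieldType.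

Lemma adjmxE m n (A : 'M[C]_(m,n)) i j : adjmx A i j = (A j i)^*.
Proof. by rewrite /adjmx !mxE. Qed.

Lemma adjmxM m n p (A : 'M[C]_(m,n)) (B : 'M[C]_(n,p)) :
  adjmx (A *m B) = adjmx B *m adjmx A.
Proof. by rewrite /adjmx trmx_mul map_mxM. Qed.

Lemma adjmxD m n (A B : 'M[C]_(m,n)) : adjmx (A + B) = adjmx A + adjmx B.
Proof. by rewrite /adjmx linearD map_mxD. Qed.

Lemma adjmxZ m n a (A : 'M[C]_(m,n)) : adjmx (a *: A) = a^* *: adjmx A.
Proof. by apply/matrixP=> i j; rewrite !mxE rmorphM. Qed.

Lemma adjmxK m n (A : 'M[C]_(m,n)) : adjmx (adjmx A) = A.
Proof. by apply/matrixP=> i j; rewrite !mxE conjCK. Qed.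

Lemma cdotE n (u v : 'cV[C]_n) : cdot u v = \sum_i (u i 0)^* * v i 0.
Proof. by rewrite /cdot mxE; apply: eq_bigr => i _; rewrite adjmxE. Qed.

Lemma cdotC n (u v : 'cV[C]_n) : cdot v u = (cdot u v)^*.
Proof. rewrite !cdotE (big_morph (@Num.conj_op C) (fun a b => rmorphD Num.conj a b) (rmorph0 _)).
by apply: eq_bigr => i _; rewrite rmorphM /= conjCK mulrC. Qed.

Lemma adj_mul_col n (u v : 'cV[C]_n) : adjmx u *m v = (cdot u v)%:M.
Proof. by apply/matrixP=> i j; rewrite !ord1 [RHS]mxE /cdot /= mulr1n. Qed.

Lemma cdot_eq0 n (u : 'cV[C]_n) : cdot u u = 1 -> u != 0.
Proof.
move=> h; apply/eqP=> u0; move: h; rewrite u0 cdotE big1.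
  by move/eqP; rewrite eq_sym oner_eq0.
by move=> i _; rewrite mxE mulr0.
Qed.

End Basics.

Section BmatS.
Variable C : numClosedFieldType.
Variable k : nat.
Local Notation N := (@ord_max k.+1).
Local Notation e := (e_last C k).

Lemma eE i : e i 0 = (i == N)%:R.
Proof. by rewrite /e_last mxE andbT. Qed.

Lemma cdot_el (v : 'cV[C]_k.+2) : cdot e v = v N 0.
Proof.
rewrite cdotE (bigD1 N) //= big1 ?addr0; first by rewrite eE eqxx rmorph1 mul1r.
by move=> i /negbTE ni; rewrite eE ni rmorph0 mul0r.
Qed.

Lemma cdot_er (v : 'cV[C]_k.+2) : cdot v e = (v N 0)^*.
Proof. by rewrite cdotC cdot_el. Qed.

Lemma cdot_ee : cdot e e = 1.
Proof. by rewrite cdot_el eE eqxx. Qed.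

Lemma adjBmat (x y : 'cV[C]_k.+2) : adjmx (Bmat x y) = Bmat y x.
Proof. by rewrite /Bmat adjmxD !adjmxM !adjmxK addrC. Qed.

Lemma Bmul (x y v : 'cV[C]_k.+2) : Bmat x y *m v = v N 0 *: x + cdot y v *: e.
Proof.
rewrite /Bmat mulmxDl -!mulmxA !adj_mul_col cdot_el.
by rewrite !mul_mx_scalar.
Qed.

Lemma BmatE (x y : 'cV[C]_k.+2) i j :
  Bmat x y i j = x i 0 * (j == N)%:R + (i == N)%:R * (y j 0)^*.
Proof.
rewrite /Bmat !mxE !big_ord1 !adjmxE !eE.
by rewrite !rmorph_nat.
Qed.

End BmatS.

Section Uniq.
Variable C : numClosedFieldType.

Lemma cdotZr n a (u v : 'cV[C]_n) : cdot u (a *: v) = a * cdot u v.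
Proof. by rewrite /cdot -scalemxAr mxE. Qed.

Lemma cdotDr n (u v w : 'cV[C]_n) : cdot u (v + w) = cdot u v + cdot u w.
Proof. by rewrite /cdot mulmxDr mxE. Qed.

Lemma svd_mul n (B : 'M[C]_n) a1 a2 (u1 u2 v1 v2 : 'cV[C]_n) :
  B = a1 *: (u1 *m adjmx v1) + a2 *: (u2 *m adjmx v2) ->
  orthonormal2 v1 v2 -> B *m v1 = a1 *: u1 /\ B *m v2 = a2 *: u2.
Proof.
move=> -> [h11 h22 h12].
have h21 : cdot v2 v1 = 0 by rewrite cdotC h12 rmorph0.
rewrite !mulmxDl -!scalemxAl -!mulmxA !adj_mul_col h11 h22 h12 h21.
by rewrite !mul_mx_scalar !scale0r !scaler0 addr0 add0r !scale1r.
Qed.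

Lemma svd_adj n (B : 'M[C]_n) a1 a2 (u1 u2 v1 v2 : 'cV[C]_n) :
  B = a1 *: (u1 *m adjmx v1) + a2 *: (u2 *m adjmx v2) ->
  adjmx B = a1^* *: (v1 *m adjmx u1) + a2^* *: (v2 *m adjmx u2).
Proof. by move=> ->; rewrite adjmxD !adjmxZ !adjmxM !adjmxK. Qed.

Lemma svd_triple n (B : 'M[C]_n) a (u1 u2 v1 v2 : 'cV[C]_n) :
  B = a *: (u1 *m adjmx v1) + a *: (u2 *m adjmx v2) ->
  orthonormal2 u1 u2 -> orthonormal2 v1 v2 ->
  B *m (adjmx B *m B) = (a * a^*) *: B.
Proof.
move=> hB hu hv.
have [Bv1 Bv2] := svd_mul hB hv.
have [Au1 Au2] := svd_mul (svd_adj hB) hu.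
have -> : adjmx B *m B = (a * a^*) *: (v1 *m adjmx v1 + v2 *m adjmx v2).
  rewrite {2}hB mulmxDr -!scalemxAr !mulmxA Au1 Au2 -!scalemxAl.
  by rewrite !scalerA scalerDr.
by rewrite -(scalemxAr (a * a^*) B) mulmxDr !mulmxA Bv1 Bv2 -!scalemxAl -hB.
Qed.

Variable k : nat.
Local Notation N := (@ord_max k.+1).
Local Notation e := (e_last C k).

Lemma N0 : (0 : 'I_k.+2) != N.
Proof. by []. Qed.

Lemma key (x y u v : 'cV[C]_k.+2) (s : C) :
  x 0 0 != 0 -> x N 0 + (y N 0)^* != 0 -> s != 0 ->
  Bmat x y *m v = s *: u -> Bmat y x *m u = s *: v -> u != 0 -> u 0 0 != 0.
Proof.
move=> x0 c0 s0 hv hu u0; apply/negP => /eqP u00.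
have := congr1 (fun M : 'cV[C]_k.+2 => M 0 0) hv; rewrite Bmul !mxE (negbTE N0) /= mulr0 addr0 u00 mulr0.
move/eqP; rewrite mulf_eq0 (negbTE x0) orbF => /eqP vN.
have ue : u = (s^-1 * cdot y v) *: e.
  by rewrite -scalerA -[u](scalerK s0) -hv Bmul vN scale0r add0r.
have := congr1 (fun M : 'cV[C]_k.+2 => M N 0) hu; rewrite Bmul !mxE eqxx /= vN mulr0 mulr1.
rewrite ue cdotZr cdot_er !mxE eqxx /= mulr1 -mulrDr.
move/eqP; rewrite mulf_eq0 => /orP[/eqP c|].
  by move: u0; rewrite ue c scale0r eqxx.
by rewrite -(conjCK (y N 0)) -rmorphD conjC_eq0 addrC (negbTE c0).
Qed.

Lemma triple00 (x y : 'cV[C]_k.+2) :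
  (Bmat x y *m (adjmx (Bmat x y) *m Bmat x y)) 0 0 =
  x 0 0 * ((y N 0 + (x N 0)^*) * (y 0 0)^*).
Proof.
rewrite adjBmat mxE (bigD1 N) //= big1 ?addr0.
2: by move=> j /negbTE jN; rewrite BmatE (negbTE N0) jN mulr0 mul0r add0r mul0r.
rewrite BmatE (negbTE N0) eqxx mulr1 mul0r addr0; congr (_ * _).
rewrite mxE (bigD1 N) //= big1 ?addr0.
2: by move=> j /negbTE jN; rewrite [Bmat x y j 0]BmatE jN (negbTE N0) mulr0 mul0r add0r mulr0.
rewrite !BmatE eqxx. have h : ((0 : 'I_k.+2) == N) = false by []. by rewrite h !mulr1 !mul1r mulr0 add0r.
Qed.

End Uniq.


Section Rank.
Variable C : numClosedFieldType.

Lemma unit22 (S : 'M[C]_2) : S 0 0 = 0 -> S 0 1 * S 1 0 != 0 -> S \in unitmx.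
Proof.
move=> h0 h1; rewrite unitmxE unitfE (expand_det_row _ 0) !big_ord_recl big_ord0.
rewrite h0 mul0r add0r addr0 /cofactor det_mx11 !mxE /=.
have -> : lift ord0 ord0 = 1 :> 'I_2 by apply/val_inj.
have -> : lift 1 0 = 0 :> 'I_2 by apply/val_inj.
by rewrite /bump /= expr1 mulN1r mulrN oppr_eq0.
Qed.
End Rank.

Section Rank2.
Variable C : numClosedFieldType.
Variable k : nat.
Local Notation N := (@ord_max k.+1).
Local Notation e := (e_last C k).

Lemma rank_colsub m n p (g : 'I_p -> 'I_n) (A : 'M[C]_(m, n)) :
  (\rank (colsub g A) <= \rank A)%N.
Proof.
have -> : colsub g A = (rowsub g A^T)^T by apply/matrixP => i j; rewrite !mxE.
by rewrite mxrank_tr -[X in (_ <= X)%N]mxrank_tr mxrankS // rowsub_sub.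
Qed.

Lemma rankB (x y : 'cV[C]_k.+2) :
  Bmat x y 0 N != 0 -> Bmat x y N 0 != 0 -> \rank (Bmat x y) = 2%N.
Proof.
move=> h1 h2; apply/eqP; rewrite eqn_leq; apply/andP; split.
  have -> : Bmat x y = row_mx x e *m col_mx (adjmx e) (adjmx y) by rewrite mul_row_col.
  exact: leq_trans (mxrankM_maxl _ _) (rank_leq_col _).
pose f (i : 'I_2) : 'I_k.+2 := if i == 0 then 0 else N.
pose S := rowsub f (colsub f (Bmat x y)).
have uS : S \in unitmx.
  have Sij : forall i j, S i j = Bmat x y (f i) (f j).
    by move=> i j; rewrite [LHS]mxE [LHS]mxE.
  apply: unit22; rewrite !Sij /f /=.
    by rewrite BmatE (negbTE (N0 k)) mulr0 mul0r addr0.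
  by rewrite mulf_neq0.
rewrite -(mxrank_unit uS).
apply: leq_trans (mxrankS (rowsub_sub _ _)) _.
exact: rank_colsub.
Qed.
End Rank2.


Section Un.
Variable R : rcfType.
Variable k : nat.
Local Notation N := (@ord_max k.+1).

Lemma conj_realC (s : R) : ((s%:C)%C)^* = (s%:C)%C.
Proof. by rewrite conj_Creal // complex_real. Qed.

Lemma realC_eq0 (s : R) : ((s%:C)%C == 0) = (s == 0).
Proof. by rewrite (inj_eq (@complexI R)). Qed.

Lemma entry00 (a : R[i]) (u v : 'cV[R[i]]_k.+2) :
  (a *: (u *m adjmx v)) 0 0 = a * (u 0 0 * (v 0 0)^*).
Proof. by rewrite !mxE big_ord1 adjmxE. Qed.

Lemma uniq_part (x y : 'cV[R[i]]_k.+2) :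
  Bmat x y 0 N != 0 -> Bmat x y N 0 != 0 -> Bmat x y N N != 0 ->
  forall (s1 s2 : R) (u1 u2 v1 v2 : 'cV[R[i]]_k.+2),
        svd2 (Bmat x y) s1 s2 u1 u2 v1 v2 ->
        [/\ ((s1%:C)%C *: (u1 *m adjmx v1)) 0 0 != 0,
            ((s2%:C)%C *: (u2 *m adjmx v2)) 0 0 != 0 &
            s2 < s1].
Proof.
move=> h1 h2 h3 s1 s2 u1 u2 v1 v2 [le21 gt2 hu hv hB].
have gt1 : 0 < s1 by apply: lt_le_trans le21.
have S1 : (s1%:C)%C != 0 by rewrite realC_eq0 gt_eqF.
have S2 : (s2%:C)%C != 0 by rewrite realC_eq0 gt_eqF.
have x0 : x 0 0 != 0.
  by move: h1; rewrite BmatE (negbTE (N0 k)) eqxx mulr1 mul0r addr0.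
have y0 : y 0 0 != 0.
  move: h2; rewrite BmatE (negbTE (N0 k)) eqxx mulr0 add0r mul1r.
  by rewrite conjC_eq0.
have c0 : x N 0 + (y N 0)^* != 0.
  by move: h3; rewrite BmatE eqxx mulr1 mul1r.
have c0' : y N 0 + (x N 0)^* != 0.
  by rewrite -(conjCK (y N 0)) -rmorphD conjC_eq0 addrC.
have [Bv1 Bv2] := svd_mul hB hv.
have hA := svd_adj hB; rewrite !conj_realC adjBmat in hA.
have [Au1 Au2] := svd_mul hA hu.
have [u1n u2n _] := hu; have [v1n v2n _] := hv.
have ku1 := key x0 c0 S1 Bv1 Au1 (cdot_eq0 u1n).
have ku2 := key x0 c0 S2 Bv2 Au2 (cdot_eq0 u2n).
have kv1 := key y0 c0' S1 Au1 Bv1 (cdot_eq0 v1n).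
have kv2 := key y0 c0' S2 Au2 Bv2 (cdot_eq0 v2n).
split.
- by rewrite entry00 !mulf_neq0 // conjC_eq0.
- by rewrite entry00 !mulf_neq0 // conjC_eq0.
rewrite lt_neqAle le21 andbT; apply/eqP => e21.
have hB' : Bmat x y = (s1%:C)%C *: (u1 *m adjmx v1) + (s1%:C)%C *: (u2 *m adjmx v2).
  by rewrite hB e21.
have := svd_triple hB' hu hv.
move/(congr1 (fun M : 'M[R[i]]_k.+2 => M 0 0)).
rewrite triple00 mxE BmatE (negbTE (N0 k)) mulr0 mul0r addr0 mulr0.
by apply/eqP; rewrite !mulf_neq0 // conjC_eq0.
Qed.
End Un.


Section S22.
Variable R : rcfType.

Lemma via0 (X Y Z : R) : X - Y = Z -> Z = 0 -> X = Y.
Proof. by move=> h z; apply/eqP; rewrite -subr_eq0 h z. Qed.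

Lemma svd22_core (r a b h m t1 t2 s1 s2 : R) :
  h^+2 + h * (r^+2+b^+2-a^+2) - a^+2 * r^+2 = 0 ->
  m^+2 * (r^+2 * a^+2 + h^+2) - 1 = 0 ->
  s1 * t1 - 1 = 0 -> s2 * t2 - 1 = 0 ->
  t1^+2 * (h + r^+2 + b^+2) - 1 = 0 -> t2^+2 * (a^+2 - h) - 1 = 0 ->
  let q11 := r * a * m in let q12 := h * m in let q21 := - (h * m) in let q22 := r * a * m in
  let p11 := (r * q11 + a * q12) * t1 in let p12 := b * q11 * t1 in
  let p21 := (r * q21 + a * q22) * t2 in let p22 := b * q21 * t2 in
  ((q11^+2+q12^+2 = 1) /\ (q21^+2+q22^+2 = 1) /\ (q11 * q21+q12 * q22 = 0)) /\
  ((p11^+2+p12^+2 = 1) /\ (p21^+2+p22^+2 = 1) /\ (p11 * p21+p12 * p22 = 0)) /\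
  ((s1 * p11 * q11 + s2 * p21 * q21 = r) /\ (s1 * p11 * q12 + s2 * p21 * q22 = a) /\
   (s1 * p12 * q11 + s2 * p22 * q21 = b) /\ (s1 * p12 * q12 + s2 * p22 * q22 = 0)).
Proof.
move=> hQ hm hs1 hs2 ht1 ht2 q11 q12 q21 q22 p11 p12 p21 p22.
split; [split; [|split]|split; [split; [|split]|split; [|split; [|split]]]].
- apply: (via0 (Z := 1 * (m^+2 * (r^+2 * a^+2 + h^+2) - 1))); last by rewrite hm mulr0.
  rewrite /q11 /q12; ring.
- apply: (via0 (Z := 1 * (m^+2 * (r^+2 * a^+2 + h^+2) - 1))); last by rewrite hm mulr0.
  rewrite /q21 /q22; ring.
- rewrite /q11 /q12 /q21 /q22; ring.
- apply: (via0 (Z := t1^+2 * (h + r^+2 + b^+2) * (m^+2 * (r^+2 * a^+2 + h^+2) - 1)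
     + (t1^+2 * (h + r^+2 + b^+2) - 1)
     - t1^+2 * m^+2 * h * (h^+2 + h * (r^+2+b^+2-a^+2) - a^+2 * r^+2))).
    rewrite /p11 /p12 /q11 /q12; ring.
  by rewrite hm ht1 hQ !mulr0 subr0 addr0.
- apply: (via0 (Z := t2^+2 * (a^+2 - h) * (m^+2 * (r^+2 * a^+2 + h^+2) - 1)
     + (t2^+2 * (a^+2 - h) - 1)
     + t2^+2 * m^+2 * h * (h^+2 + h * (r^+2+b^+2-a^+2) - a^+2 * r^+2))).
    rewrite /p21 /p22 /q21 /q22; ring.
  by rewrite hm ht2 hQ !mulr0 !addr0.
- apply: (via0 (Z := - (t1 * t2 * m^+2 * a * r) * (h^+2 + h * (r^+2+b^+2-a^+2) - a^+2 * r^+2))).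
    rewrite /p11 /p12 /p21 /p22 /q11 /q12 /q21 /q22; ring.
  by rewrite hQ mulr0.
- apply: (via0 (Z := (r * q11 + a * q12) * q11 * (s1 * t1 - 1) + (r * q21 + a * q22) * q21 * (s2 * t2 - 1)
     + r * (m^+2 * (r^+2 * a^+2 + h^+2) - 1))).
    rewrite /p11 /p21 /q11 /q12 /q21 /q22; ring.
  by rewrite hm hs1 hs2 !mulr0 !addr0.
- apply: (via0 (Z := (r * q11 + a * q12) * q12 * (s1 * t1 - 1) + (r * q21 + a * q22) * q22 * (s2 * t2 - 1)
     + a * (m^+2 * (r^+2 * a^+2 + h^+2) - 1))).
    rewrite /p11 /p21 /q11 /q12 /q21 /q22; ring.
  by rewrite hm hs1 hs2 !mulr0 !addr0.
- apply: (via0 (Z := b * q11 * q11 * (s1 * t1 - 1) + b * q21 * q21 * (s2 * t2 - 1)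
     + b * (m^+2 * (r^+2 * a^+2 + h^+2) - 1))).
    rewrite /p12 /p22 /q11 /q12 /q21 /q22; ring.
  by rewrite hm hs1 hs2 !mulr0 !addr0.
- apply: (via0 (Z := b * q11 * q12 * (s1 * t1 - 1) + b * q21 * q22 * (s2 * t2 - 1))).
    rewrite /p12 /p22 /q11 /q12 /q21 /q22; ring.
  by rewrite hs1 hs2 !mulr0 !addr0.
Qed.
End S22.

Section S22b.
Variable R : rcfType.

Lemma sqrt_inv_facts (X : R) : 0 < X ->
  let s := Num.sqrt X in let t := s^-1 in
  [/\ 0 < s, s * t - 1 = 0 & t^+2 * X - 1 = 0].
Proof.
move=> X0 s t; have s0 : 0 < s by rewrite sqrtr_gt0.
have sn : s != 0 by rewrite gt_eqF.
split => //; first by rewrite divff // subrr.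
by rewrite -[X](sqr_sqrtr (ltW X0)) -/s -exprMn mulrC divff // expr1n subrr.
Qed.

Lemma svd22 (r a b : R) : 0 < r -> 0 < a -> 0 < b ->
  exists (s1 s2 q11 q12 q21 q22 p11 p12 p21 p22 : R),
  s2 <= s1 /\ 0 < s2 /\
  ((q11^+2+q12^+2 = 1) /\ (q21^+2+q22^+2 = 1) /\ (q11 * q21+q12 * q22 = 0)) /\
  ((p11^+2+p12^+2 = 1) /\ (p21^+2+p22^+2 = 1) /\ (p11 * p21+p12 * p22 = 0)) /\
  ((s1 * p11 * q11 + s2 * p21 * q21 = r) /\ (s1 * p11 * q12 + s2 * p21 * q22 = a) /\
   (s1 * p12 * q11 + s2 * p22 * q21 = b) /\ (s1 * p12 * q12 + s2 * p22 * q22 = 0)).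
Proof.
move=> r0 a0 b0.
pose T := r^+2 + a^+2 + b^+2.
pose X := T^+2 - 4%:R * a^+2 * b^+2.
have T0 : 0 < T by rewrite /T !addr_gt0 // exprn_gt0.
have X0 : 0 <= X.
  have -> : X = (a^+2 - b^+2)^+2 + r^+2 * (r^+2 + 2%:R * a^+2 + 2%:R * b^+2).
    by rewrite /X /T; ring.
  by rewrite addr_ge0 ?sqr_ge0 // mulr_ge0 ?sqr_ge0 // !addr_ge0 ?sqr_ge0 // mulr_ge0 ?sqr_ge0.
pose D := Num.sqrt X.
have D0 : 0 <= D by apply: sqrtr_ge0.
have D2 : D^+2 = X by apply: sqr_sqrtr.
have DT : D < T.
  rewrite -[T in _ < T]ger0_norm ?ltW // -sqrtr_sqr ltr_sqrt ?exprn_gt0 //.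
  rewrite /X ltrBlDr ltrDl !mulr_gt0 ?exprn_gt0 //.
pose h := (a^+2 - r^+2 - b^+2 + D) / 2%:R.
have hQ : h^+2 + h * (r^+2+b^+2-a^+2) - a^+2 * r^+2 = 0.
  apply: (via0 (Z := (D^+2 - X) / 4%:R)); last by rewrite D2 subrr mul0r.
  rewrite /h /X /T; field. all: try by [].
have l1 : 0 < h + r^+2 + b^+2.
  rewrite /h; have : 0 < r^+2 by rewrite exprn_gt0.
  have : 0 < a^+2 by rewrite exprn_gt0.
  have : 0 < b^+2 by rewrite exprn_gt0.
  move: D0; rewrite /T in DT * => *; lra.
have l2 : 0 < a^+2 - h.
  rewrite /h; move: DT; rewrite /T => *; lra.
have l12 : a^+2 - h <= h + r^+2 + b^+2.
  by rewrite /h; move: D0 => *; lra.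
have K0 : 0 < r^+2 * a^+2 + h^+2.
  by rewrite ltr_wpDr ?sqr_ge0 // mulr_gt0 // exprn_gt0.
have [s10 hs1 ht1] := sqrt_inv_facts l1.
have [s20 hs2 ht2] := sqrt_inv_facts l2.
have [_ _ hm] := sqrt_inv_facts K0.
have := svd22_core hQ hm hs1 hs2 ht1 ht2.
move=> /= [hq [hp hM]].
do 10 eexists; split; last split; last by split; [exact: hq | split; [exact: hp| exact: hM]].
  exact: ler_wsqrtr.
exact: s20.
Qed.
End S22b.


Section Gen.
Variable C : numClosedFieldType.

Lemma cdotZl n a (u v : 'cV[C]_n) : cdot (a *: u) v = a^* * cdot u v.
Proof. by rewrite /cdot adjmxZ -scalemxAl mxE. Qed.

Lemma cdotDl n (u v w : 'cV[C]_n) : cdot (u + v) w = cdot u w + cdot v w.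
Proof. by rewrite /cdot adjmxD mulmxDl mxE. Qed.

Lemma cdot2 n (E1 E2 : 'cV[C]_n) al be ga de :
  cdot E1 E1 = 1 -> cdot E2 E2 = 1 -> cdot E1 E2 = 0 ->
  cdot (al *: E1 + be *: E2) (ga *: E1 + de *: E2) = al^* * ga + be^* * de.
Proof.
move=> h11 h22 h12; have h21 : cdot E2 E1 = 0 by rewrite cdotC h12 rmorph0.
rewrite !cdotDl !cdotDr !cdotZl !cdotZr h11 h22 h12 h21; ring.
Qed.

Lemma via0C (X Y Z : C) : X - Y = Z -> Z = 0 -> X = Y.
Proof. by move=> h z; apply/eqP; rewrite -subr_eq0 h z. Qed.

Lemma outerE n (u v : 'cV[C]_n) i j : (u *m adjmx v) i j = u i 0 * (v j 0)^*.
Proof. by rewrite mxE big_ord1 adjmxE. Qed.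

Lemma entry_id (s1 s2 p11 p12 p21 p22 q11 q12 q21 q22 r a b om omc ai bi Ei Ej xi xN yjc yNc : C) :
 s1 * p11 * q11 + s2 * p21 * q21 = r -> s1 * p11 * q12 + s2 * p21 * q22 = a ->
 s1 * p12 * q11 + s2 * p22 * q21 = b -> s1 * p12 * q12 + s2 * p22 * q22 = 0 ->
 r * om = xN + yNc -> a * ai * (om * omc) = 1 -> b * bi = 1 ->
 s1 * ((p11 * (om * Ei) + p12 * (bi * (xi - xN * Ei))) * (q11 * Ej + q12 * (omc * ai * (yjc - yNc * Ej))))
 + s2 * ((p21 * (om * Ei) + p22 * (bi * (xi - xN * Ei))) * (q21 * Ej + q22 * (omc * ai * (yjc - yNc * Ej))))
 = xi * Ej + Ei * yjc.
Proof.
move=> K1 K2 K3 K4 hr ha hb.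
apply: (via0C (Z :=
  (s1 * p11 * q11 + s2 * p21 * q21 - r) * (om * Ei * Ej)
  + (s1 * p11 * q12 + s2 * p21 * q22 - a) * (om * Ei * (omc * ai * (yjc - yNc * Ej)))
  + (s1 * p12 * q11 + s2 * p22 * q21 - b) * (bi * (xi - xN * Ei) * Ej)
  + (s1 * p12 * q12 + s2 * p22 * q22) * (bi * (xi - xN * Ei) * (omc * ai * (yjc - yNc * Ej)))
  + (r * om - (xN + yNc)) * (Ei * Ej)
  + (a * ai * (om * omc) - 1) * (Ei * (yjc - yNc * Ej))
  + (b * bi - 1) * ((xi - xN * Ei) * Ej))).
  ring.
by rewrite K1 K2 K3 K4 hr ha hb !subrr !mul0r !addr0.
Qed.

Lemma assemble k (x y E1 F2 G2 : 'cV[C]_k.+2) (s1 s2 p11 p12 p21 p22 q11 q12 q21 q22 r a b om : C) :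
 (forall i, E1 i 0 = om * (i == ord_max)%:R) ->
 (forall i, G2 i 0 = b^-1 * (x i 0 - x ord_max 0 * (i == ord_max)%:R)) ->
 (forall j, (F2 j 0)^* = om^* * a^-1 * ((y j 0)^* - (y ord_max 0)^* * (j == ord_max)%:R)) ->
 q11^* = q11 -> q12^* = q12 -> q21^* = q21 -> q22^* = q22 ->
 s1 * p11 * q11 + s2 * p21 * q21 = r -> s1 * p11 * q12 + s2 * p21 * q22 = a ->
 s1 * p12 * q11 + s2 * p22 * q21 = b -> s1 * p12 * q12 + s2 * p22 * q22 = 0 ->
 r * om = x ord_max 0 + (y ord_max 0)^* -> a * a^-1 * (om * om^*) = 1 -> b * b^-1 = 1 ->
 Bmat x y = s1 *: ((p11 *: E1 + p12 *: G2) *m adjmx (q11 *: e_last C k + q12 *: F2))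
          + s2 *: ((p21 *: E1 + p22 *: G2) *m adjmx (q21 *: e_last C k + q22 *: F2)).
Proof.
move=> E1E G2E F2E c11 c12 c21 c22 K1 K2 K3 K4 hr ha hb.
apply/matrixP => i j.
rewrite BmatE !mxE !big_ord1 !mxE andbT.
rewrite !(rmorphD, rmorphM) /= c11 c12 c21 c22 !E1E !G2E !F2E rmorph_nat.
apply/esym; exact: (entry_id _ _ _ _ K1 K2 K3 K4 hr ha hb).
Qed.

End Gen.

Section Ex.
Variable R : rcfType.
Variable k : nat.
Local Notation C := (R[i]).
Local Notation N := (@ord_max k.+1).
Local Notation e := (e_last C k).
Local Notation "x %:C" := (real_complex R x) (format "x %:C") : ring_scope.

Lemma realpos (X : C) : 0 < X -> exists2 t : R, 0 < t & t%:C = X.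
Proof.
move=> X0; have Xr : X \is Num.real by apply: gtr0_real.
exists (@complex.Re R X); last exact: RRe_real.
by rewrite -ltcR (RRe_real Xr).
Qed.

Lemma cdot_pos (u : 'cV[C]_k.+2) : u 0 0 != 0 -> 0 < cdot u u.
Proof.
move=> u0; rewrite cdotE (bigD1 0) //=.
apply: ltr_pwDl.
  by rewrite mulrC mul_conjC_gt0.
by apply: sumr_ge0 => i _; rewrite mulrC mul_conjC_ge0.
Qed.

Lemma conjR (s : R) : (s%:C)^* = s%:C.
Proof. exact: conj_realC. Qed.

Lemma eEc i : (e i 0)^* = e i 0.
Proof. by rewrite eE rmorph_nat. Qed.


Lemma addscaleE m n (a b : C) (A B : 'M[C]_(m, n)) i j :
  (a *: A + b *: B) i j = a * A i j + b * B i j.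
Proof. by rewrite !mxE. Qed.

Lemma exist_part (x y : 'cV[C]_k.+2) :
  Bmat x y 0 N != 0 -> Bmat x y N 0 != 0 -> Bmat x y N N != 0 ->
  exists (s1 s2 : R) (u1 u2 v1 v2 : 'cV[C]_k.+2), svd2 (Bmat x y) s1 s2 u1 u2 v1 v2.
Proof.
move=> h1 h2 h3.
have x0 : x 0 0 != 0.
  by move: h1; rewrite BmatE (negbTE (N0 k)) eqxx mulr1 mul0r addr0.
have y0 : y 0 0 != 0.
  move: h2; rewrite BmatE (negbTE (N0 k)) eqxx mulr0 add0r mul1r.
  by rewrite conjC_eq0.
pose c := x N 0 + (y N 0)^*.
have c0 : c != 0 by move: h3; rewrite BmatE eqxx mulr1 mul1r.
pose z := y - y N 0 *: e. pose w := x - x N 0 *: e.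
have zE : forall i, z i 0 = y i 0 - y N 0 * (i == N)%:R by move=> i; rewrite !mxE andbT.
have wE : forall i, w i 0 = x i 0 - x N 0 * (i == N)%:R by move=> i; rewrite !mxE andbT.
have zN : z N 0 = 0 by rewrite zE eqxx mulr1 subrr.
have wN : w N 0 = 0 by rewrite wE eqxx mulr1 subrr.
have z0 : z 0 0 != 0 by rewrite zE (negbTE (N0 k)) mulr0 subr0.
have w0 : w 0 0 != 0 by rewrite wE (negbTE (N0 k)) mulr0 subr0.
have ez : cdot e z = 0 by rewrite cdot_el zN.
have ew : cdot e w = 0 by rewrite cdot_el wN.
have [A A0 AE] := realpos (cdot_pos z0).
have [B B0 BE] := realpos (cdot_pos w0).
have [r r0 rE] : exists2 r : R, 0 < r & r%:C = `|c| by apply: realpos; rewrite normr_gt0.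
set a := Num.sqrt A. set b := Num.sqrt B.
have a0 : 0 < a by rewrite sqrtr_gt0.
have b0 : 0 < b by rewrite sqrtr_gt0.
have aC0 : a%:C != 0 by rewrite realC_eq0 gt_eqF.
have bC0 : b%:C != 0 by rewrite realC_eq0 gt_eqF.
have aE : cdot z z = (a%:C)^+2 by rewrite -rmorphXn sqr_sqrtr ?ltW.
have bE : cdot w w = (b%:C)^+2 by rewrite -rmorphXn sqr_sqrtr ?ltW.
pose om := c / `|c|.
have nc0 : `|c| != 0 by rewrite normr_eq0.
have omc : om * om^* = 1.
  rewrite /om rmorphM /= fmorphV /= conj_normC mulrACA -normCK -invfM -expr2 divff //.
  by rewrite expf_neq0.
have rom : r%:C * om = c by rewrite rE /om mulrCA divff ?mulr1.
clearbody om.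
have [s1 [s2 [q11 [q12 [q21 [q22 [p11 [p12 [p21 [p22 H]]]]]]]]]] := svd22 r0 a0 b0.
move: H => [le12 [s20 [[hq1 [hq2 hq3]] [[hp1 [hp2 hp3]] [K1 [K2 [K3 K4]]]]]]].
pose E1 := om *: e. pose F2 := (om / a%:C) *: z. pose G2 := (b%:C)^-1 *: w.
have hE1 : cdot E1 E1 = 1 by rewrite cdotZl cdotZr cdot_ee mulr1 mulrC omc.
have hG2 : cdot G2 G2 = 1.
  rewrite cdotZl cdotZr fmorphV /= conjR bE; field; exact: bC0.
have hE1G2 : cdot E1 G2 = 0 by rewrite cdotZl cdotZr cdot_el wN !mulr0.
have hF2 : cdot F2 F2 = 1.
  rewrite cdotZl cdotZr aE rmorphM /= fmorphV /= conjR.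
  apply: (@via0C _ _ _ ((om * om^* - 1) * 1)); last by rewrite omc subrr mul0r.
  by field; exact: aC0.
have heF2 : cdot e F2 = 0 by rewrite cdotZr ez mulr0.
have E1E : forall i, E1 i 0 = om * (i == N)%:R by move=> i; rewrite !mxE andbT.
have G2E : forall i, G2 i 0 = (b%:C)^-1 * (x i 0 - x N 0 * (i == N)%:R).
  by move=> i; rewrite /G2 mxE wE.
have F2E : forall j, (F2 j 0)^* = om^* * (a%:C)^-1 * ((y j 0)^* - (y N 0)^* * (j == N)%:R).
  move=> j; rewrite /F2 mxE zE !(rmorphD, rmorphM, rmorphN) /= fmorphV /= conjR.
  by rewrite rmorph_nat.
clearbody E1 F2 G2.
exists s1, s2, (p11%:C *: E1 + p12%:C *: G2), (p21%:C *: E1 + p22%:C *: G2),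
  (q11%:C *: e + q12%:C *: F2), (q21%:C *: e + q22%:C *: F2).
split => //.
- split; rewrite cdot2 // !conjR -!rmorphM -!rmorphD.
  + by rewrite -!expr2 hp1.
  + by rewrite -!expr2 hp2.
  + by rewrite hp3.
- split; rewrite cdot2 // ?cdot_ee // !conjR -!rmorphM -!rmorphD.
  + by rewrite -!expr2 hq1.
  + by rewrite -!expr2 hq2.
  + by rewrite hq3.
apply: (assemble (r := r%:C)) => //; rewrite ?conjR //.
- by rewrite -!rmorphM -rmorphD K1.
- by rewrite -!rmorphM -rmorphD K2.
- by rewrite -!rmorphM -rmorphD K3.
- by rewrite -!rmorphM -rmorphD K4 rmorph0.
- by rewrite divff // mul1r omc.
- by rewrite divff.
Qed.

End Ex.


(* dimension n = k.+2 (i.e. n >= 2); row/column 1 is index 0, row/column n is ord_max *)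
Theorem lemma3p1 (R : realType) (k : nat) (x y : 'cV[R[i]]_k.+2) :
  Bmat x y 0 ord_max != 0 ->
  Bmat x y ord_max 0 != 0 ->
  Bmat x y ord_max ord_max != 0 ->
  [/\ \rank (Bmat x y) = 2%N,
      (exists (s1 s2 : R) (u1 u2 v1 v2 : 'cV[R[i]]_k.+2),
          svd2 (Bmat x y) s1 s2 u1 u2 v1 v2) &
      forall (s1 s2 : R) (u1 u2 v1 v2 : 'cV[R[i]]_k.+2),
        svd2 (Bmat x y) s1 s2 u1 u2 v1 v2 ->
        [/\ ((s1%:C)%C *: (u1 *m adjmx v1)) 0 0 != 0,
            ((s2%:C)%C *: (u2 *m adjmx v2)) 0 0 != 0 &
            s2 < s1]].
Proof.
move=> h1 h2 h3; split.
- exact: rankB.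
- exact: exist_part.
- exact: uniq_part.
Qed.
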